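(* Let $N=2^L$ ($L\ge1$), channel numbers $r_0,\dots,r_{L-1}\ge1$, an output index $y$, and pairwise distinct covering templates $\mathbf x^{(1)},\dots,\mathbf x^{(M)}\in\mathbb R^s$ be given. Suppose all parameters of the deep ConvNet with ReLU activation, max pooling and weight sharing (representation parameters $\theta_1,\dots,\theta_M\in\Theta$ and the shared linear weights) are drawn from a distribution with a continuous, nowhere-vanishing probability density function. Then with positive probability the resulting score function $h^D_y$ can be realized by a shallow ConvNet with ReLU activation and max pooling (not limited by weight sharing) having a single hidden channel ($Z=1$), i.e. there exist $f_{\tilde\theta_1},\dots,f_{\tilde\theta_M}\in\mathcal F$ and weights for this shallow ConvNet with $\mathcal A(h^S_y)=\mathcal A(h^D_y)$.
   Context: Inputs are $X=(\mathbf x_1,\dots,\mathbf x_N)\in(\mathbb R^s)^N$. Representation functions come from a family $\mathcal F=\{f_\theta:\mathbb R^s\to\mathbb R:\theta\in\Theta\}$, $\Theta$ an open subset of a Euclidean space, assumed throughout to satisfy: (continuity) $f_\theta(\mathbf x)$ continuous in $\theta$ and $\mathbf x$; (non-degeneracy) for any pairwise distinct $\mathbf x^{(1)},\dots,\mathbf x^{(M)}$ there exist $f_{\theta_1},\dots,f_{\theta_M}\in\mathcal F$ with $(f_{\theta_d}(\mathbf x^{(i)}))_{i,d}$ non-singular. ReLU activation with max pooling: $\sigma(z)=\max\{0,z\}$, $P=\max$. Shallow ConvNet ($Z$ hidden channels, unshared): $h^S_y(X)=\sum_{z=1}^Z a^y_z\,P_{i\in[N]}\big(\sigma(\sum_{d=1}^M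 a^{z,i}_d f_{\theta_d}(\mathbf x_i))\big)$, $\mathbf a^{z,i}\in\mathbb R^M$, $\mathbf a^y\in\mathbb R^Z$. Deep ConvNet with weight sharing: with $f_{\theta_d}\in\mathcal F$ and weights $\mathbf a^{0,\gamma}\in\mathbb R^M$ ($\gamma\in[r_0]$), $\mathbf a^{l,\gamma}\in\mathbb R^{r_{l-1}}$ ($l\in[L-1]$, $\gamma\in[r_l]$), $\mathbf a^{L,y}\in\mathbb R^{r_{L-1}}$: $u^0_{j,\gamma}=\sigma(\sum_d a^{0,\gamma}_d f_{\theta_d}(\mathbf x_j))$; for $l=0,\dots,L-1$, $v^l_{j,\gamma}=P(u^l_{2j-1,\gamma},u^l_{2j,\gamma})$ ($j\in[N/2^{l+1}]$), for $l\ge1$, $u^l_{j,\gamma}=\sigma(\sum_\alpha a^{l,\gamma}_\alpha v^{l-1}_{j,\alpha})$ ($j\in[N/2^l]$); $h^D_y(X)=\sum_\alpha a^{L,y}_\alpha v^{L-1}_{1,\alpha}$. Grid tensor: $\mathcal A(h)_{d_1,\dots,d_N}=h(\mathbf x^{(d_1)},\dots,\mathbf x^{(d_N)})$. Templates are covering if score functions are identified whenever their grid tensors coincide. *)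

(* Defs.v *)
From mathcomp Require Import all_boot all_order all_algebra.
From mathcomp Require Import all_classical all_reals all_analysis.
Import numFieldNormedType.Exports.
Import Order.TTheory GRing.Theory Num.Theory.

Set Implicit Arguments.
Unset Strict Implicit.
Unset Printing Implicit Defensive.

Local Open Scope ring_scope.
Local Open Scope classical_set_scope.

Section ConvNets.
Context {R : realType}.

Definition relu (z : R) : R := Num.max 0 z.

(** Indices are 0-based: input positions j = 0..N-1, pooling pairs      *)
(** (2j, 2j+1) (the paper's (2j-1, 2j) in 1-based indexing).           *)
(**   rep d x   = f_{theta_d}(x)                                       *)
(**   a0 g d    = a^{0,g}_d                                            *)
(**   a l g al  = a^{l,g}_al  (1 <= l <= L-1)                          *)
(**   aL al     = a^{L,y}_al                                           *)
Section Deep.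
Variables (s M L : nat) (r : nat -> nat).
Variables (rep : 'I_M -> 'rV[R]_s -> R) (a0 : nat -> 'I_M -> R)
  (a : nat -> nat -> nat -> R) (aL : nat -> R) (X : nat -> 'rV[R]_s).

Fixpoint deep_u (l : nat) (j g : nat) : R :=
  match l with
  | 0 => relu (\sum_(d < M) a0 g d * rep d (X j))
  | l'.+1 => relu (\sum_(al < r l')
                     a l'.+1 g al * Num.max (deep_u l' (2 * j) al)
                                            (deep_u l' (2 * j).+1 al))
  end.

Definition deep_v (l j g : nat) : R :=
  Num.max (deep_u l (2 * j) g) (deep_u l (2 * j).+1 g).

Definition deep_score : R := \sum_(al < r L.-1) aL al * deep_v L.-1 0 al.
End Deep.

Definition shallow1_score (s M N : nat) (rep : 'I_M -> 'rV[R]_s -> R)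
  (b : 'I_N -> 'I_M -> R) (c : R) (X : 'I_N -> 'rV[R]_s) : R :=
  c * \big[Num.max/0]_(i < N) relu (\sum_(d < M) b i d * rep d (X i)).

(** Parameter space of the deep network: all parameters are collected    *)
(** in a single vector indexed by the finite type [pidx], i.e.          *)
(**   theta_d (d < M), coordinate j < k  (theta_d in Theta subset R^k)  *)
(** + a^{0,g}_d         (g < r_0, d < M)                                *)
(** + a^{l+1,g}_al      (l < L-1, g < r_{l+1}, al < r_l)                *)
(** + a^{L,y'}_al       (y' < Y output indices, al < r_{L-1}).           *)
(** A parameter vector is a tuple of reals of length #|pidx|; the         *)
(** coordinate of index i is stored at position enum_rank i.             *)
Definition pidx (M k L Y : nat) (r : nat -> nat) : finType :=
  (('I_M * 'I_k) + ('I_(r 0) * 'I_M)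
   + {l : 'I_L.-1 & ('I_(r l.+1) * 'I_(r l))%type}
   + ('I_Y * 'I_(r L.-1)))%type.

Section Decode.
Variables (M k L Y : nat) (r : nat -> nat).
Let I := pidx M k L Y r.
Variable t : #|{: I}|.-tuple R.

Definition par (i : I) : R := tnth t (enum_rank i).

Definition dec_theta (d : 'I_M) : 'rV[R]_k :=
  \row_(j < k) par (inl (inl (inl (d, j)))).

Definition dec_a0 (g : nat) (d : 'I_M) : R :=
  match (insub g : option 'I_(r 0)) with
  | Some g' => par (inl (inl (inr (g', d))))
  | None => 0
  end.

Definition dec_a (l g al : nat) : R :=
  match l with
  | 0 => 0
  | l'.+1 =>
    match (insub l' : option 'I_L.-1) with
    | Some lo =>
      match (insub g : option 'I_(r lo.+1)), (insub al : option 'I_(r lo)) with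
      | Some g', Some al' =>
          par (inl (inr (existT (fun l0 : 'I_L.-1 => ('I_(r l0.+1) * 'I_(r l0))%type)
                                lo (g', al'))))
      | _, _ => 0
      end
    | None => 0
    end
  end.

Definition dec_aL (y : 'I_Y) (al : nat) : R :=
  match (insub al : option 'I_(r L.-1)) with
  | Some al' => par (inr (y, al'))
  | None => 0
  end.
End Decode.

Definition deep_net_score (s M k L Y : nat) (r : nat -> nat)
  (f : 'rV[R]_k -> 'rV[R]_s -> R) (y : 'I_Y)
  (t : #|{: pidx M k L Y r}|.-tuple R) (N : nat) (X : 'I_N -> 'rV[R]_s) : R :=
  deep_score L r (fun d x => f (dec_theta t d) x) (dec_a0 t) (dec_a t)
    (dec_aL t y)
    (fun j => match (insub j : option 'I_N) with Some i => X i | None => 0 end).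

(** nonnegative measurable integrand this is the integral against the   *)
(** n-dimensional Lebesgue measure (Fubini-Tonelli).                    *)
Fixpoint iter_lebesgue_int (n : nat) : (n.-tuple R -> \bar R) -> \bar R :=
  match n return (n.-tuple R -> \bar R) -> \bar R with
  | 0 => fun F => F [tuple]
  | n'.+1 => fun F =>
      (\int[@lebesgue_measure R]_x
         iter_lebesgue_int (fun t : n'.-tuple R => F [tuple of x :: t]))%E
  end.

Definition tuple_continuous_on (n : nat) (O : set (n.-tuple R))
  (p : n.-tuple R -> R) : Prop :=
  forall t, O t -> forall e : R, 0 < e ->
    exists2 del : R, 0 < del &
      forall t', O t' -> (forall i, `|tnth t i - tnth t' i| < del) ->
        `|p t - p t'| < e.

Definition cont_nowhere_vanishing_pdf (n : nat) (Omega : set (n.-tuple R))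
  (p : n.-tuple R -> R) : Prop :=
  [/\ forall t, Omega t -> 0 < p t,
      forall t, ~ Omega t -> p t = 0,
      tuple_continuous_on Omega p
    & iter_lebesgue_int (fun t => (p t)%:E) = 1%E].

Definition prob_density (n : nat) (p : n.-tuple R -> R) (A : set (n.-tuple R))
  : \bar R :=
  iter_lebesgue_int (fun t => (p t * \1_A t)%:E).

End ConvNets.

(* Main.v *)
Require Import Defs.
From mathcomp Require Import all_boot all_order all_algebra.
From mathcomp Require Import all_classical all_reals all_analysis.
From mathcomp Require Import lra zify.
Import numFieldNormedType.Exports.
Import Order.TTheory GRing.Theory Num.Theory.
Local Open Scope ring_scope.
Local Open Scope classical_set_scope.
Section Integ.
Context {R : realType}.
Local Open Scope ereal_scope.

Lemma int_mono (f g : R -> \bar R) : (forall x, 0 <= f x) -> (forall x, f x <= g x) ->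
  \int[@lebesgue_measure R]_x f x <= \int[@lebesgue_measure R]_x g x.
Proof.
move=> f0 fg.
have g0 x : 0 <= g x by apply: le_trans (fg x).
rewrite !ge0_integralTE //; apply: ereal_sup_le => _ [h hf <-]; exists h => //.
by move=> x; apply: le_trans (hf x) (fg x).
Qed.

Lemma iter_ge0 n (F : n.-tuple R -> \bar R) : (forall t, 0 <= F t) -> 0 <= iter_lebesgue_int F.
Proof.
elim: n F => [|n IH] F F0 /=; first exact: F0.
by apply: integral_ge0 => x _; apply: IH.
Qed.

Lemma iter_lb n (t0 : n.-tuple R) (del c : R) (F : n.-tuple R -> \bar R) :
  (0 < del)%R -> (0 <= c)%R -> (forall t, 0 <= F t) ->
  (forall t, (forall i, `|tnth t0 i - tnth t i| < del)%R -> c%:E <= F t) ->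
  (c * (del *+ 2) ^+ n)%:E <= iter_lebesgue_int F.
Proof.
move=> del0 c0; elim: n t0 F => [|n IH] t0 F F0 HF /=.
  by rewrite expr0 mulr1; apply: HF => -[].
move: HF; case: t0 => -[//|x0 s0] /= Hs HF.
have Hs' : size s0 == n by [].
pose t0' := Tuple Hs'.
set k := (c * (del *+ 2) ^+ n)%R.
have k0 : (0 <= k)%R by rewrite /k mulr_ge0 // exprn_ge0 // mulrn_wge0 // ltW.
have step : forall x, (k * \1_(`]x0 - del, x0 + del[%classic) x)%:E <=
   iter_lebesgue_int (fun t : n.-tuple R => F [tuple of x :: t]).
  move=> x; rewrite indicE; case: (boolP (x \in _)) => xin; last first.
    by rewrite mulr0; apply: iter_ge0.
  rewrite mulr1; apply: (IH t0') => // t Ht; apply: HF => i.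
  case: (unliftP ord0 i) => [j ->|->] /=.
    by have := Ht j; rewrite !(tnth_nth x0).
  rewrite !(tnth_nth x0) /=. move: xin; rewrite inE /= in_itv /= => /andP[h1 h2].
  rewrite ltr_norml; apply/andP; split; lra.
apply: le_trans; last first.
  apply: int_mono step.
  by move=> x; rewrite lee_fin mulr_ge0 //.
set S := (`](x0 - del)%R, (x0 + del)%R[%classic : set R).
rewrite (_ : \int[lebesgue_measure]_x (k * \1_S x)%:E = k%:E * \int[lebesgue_measure]_x (\1_S x)%:E); last first.
  apply: (integralZl_indic (m := @lebesgue_measure R) measurableT (fun _ => S) k).
    by move=> /lt_geF; rewrite k0.
  exact: measurable_itv.
rewrite integral_indic //; last exact: measurable_itv.
rewrite setIT /S.
set m := (X in k%:E * X).
have -> : m = ((x0 + del)%R%:E - (x0 - del)%R%:E)%E.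
  have := @lebesgue_measure_itv R (Interval (BRight (x0 - del)%R) (BLeft (x0 + del)%R)).
  rewrite /= lte_fin ifT; last by lra.
  by [].
rewrite -EFinB -EFinM lee_fin /k exprS.
have -> : (x0 + del - (x0 - del) = del *+ 2)%R by rewrite mulr2n; lra.
by rewrite [X in (_ * X <= _)%R]mulrC mulrA.
Qed.
End Integ.

Section Deep0.
Context {R : realType}.

Lemma relu_npos (z : R) : z <= 0 -> relu z = 0.
Proof. by move=> hz; rewrite /relu; apply/max_idPl. Qed.

Lemma deep_zero (s M k L Y : nat) (r : nat -> nat) (f : 'rV[R]_k -> 'rV[R]_s -> R)
  (y : 'I_Y) (t : #|{: pidx M k L Y r}|.-tuple R) (xt : 'I_M -> 'rV[R]_s) :
 (1 <= L)%N ->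
 (forall (g : 'I_(r 0)) (d' : 'I_M),
    \sum_(d < M) par t (inl (inl (inr (g, d)))) * f (dec_theta t d) (xt d') <= 0) ->
 forall ds : 'I_(2^L) -> 'I_M, deep_net_score f y t (fun i => xt (ds i)) = 0.
Proof.
move=> HL HZ ds.
rewrite /deep_net_score /deep_score.
set X := (fun j0 : nat => match insub j0 with Some _ => _ | None => _ end).
have Hu : forall l j g, (2 ^ l * j.+1 <= 2 ^ L)%N ->
   deep_u r (fun d x => f (dec_theta t d) x) (dec_a0 t) (dec_a t) X l j g = 0.
  elim=> [|l IH] j g Hj /=.
    apply: relu_npos; rewrite /X.
    have jlt : (j < 2 ^ L)%N by move: Hj; rewrite expn0 mul1n.
    rewrite (insubT (fun j => j < 2 ^ L)%N jlt) /=.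
    rewrite /dec_a0; case: insubP => [g' _ _|_].
      exact: HZ.
    by rewrite big1 // => d _; rewrite mul0r.
  rewrite relu_npos // big1 // => al _.
  rewrite !IH ?maxxx ?mulr0 //.
    move: Hj; rewrite expnS; set P := (2 ^ l)%N; nia.
  move: Hj; rewrite expnS; set P := (2 ^ l)%N; nia.
rewrite big1 // => al _.
have HL2 : (2 ^ L.-1 * 2 <= 2 ^ L)%N by rewrite -expnSr prednK.
by rewrite /deep_v !Hu ?maxxx ?mulr0 //; move: HL2; set P := (2 ^ L.-1)%N; nia.
Qed.
End Deep0.

Set Implicit Arguments.
Unset Strict Implicit.
Section NearT.
Context {R : realType}.

Definition nearTup n (t0 : n.-tuple R) (Q : n.-tuple R -> Prop) :=
  exists2 del : R, 0 < del & forall t, (forall i, `|tnth t0 i - tnth t i| < del) -> Q t.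

Lemma nearTup_and n (t0 : n.-tuple R) P Q : nearTup t0 P -> nearTup t0 Q -> nearTup t0 (fun t => P t /\ Q t).
Proof.
move=> [d1 d10 H1] [d2 d20 H2]; exists (Num.min d1 d2); first by rewrite lt_min d10.
move=> t Ht; split.
  by apply: H1 => i; apply: lt_le_trans (Ht i) _; rewrite ge_min lexx.
by apply: H2 => i; apply: lt_le_trans (Ht i) _; rewrite ge_min lexx orbT.
Qed.

Lemma nearTup_all n (t0 : n.-tuple R) (J : finType) (Q : J -> n.-tuple R -> Prop) :
  (forall j, nearTup t0 (Q j)) -> nearTup t0 (fun t => forall j, Q j t).
Proof.
move=> HQ.
suff [del del0 H] : nearTup t0 (fun t => forall j, j \in enum J -> Q j t).
  by exists del => // t Ht j; apply: H => //; rewrite mem_enum.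
elim: (enum J) => [|j s [del del0 IH]].
  by exists 1 => // t _ j; rewrite in_nil.
have [del' del0' H'] := nearTup_and (HQ j) (ex_intro2 _ _ del del0 IH).
exists del' => // t Ht x; rewrite in_cons => /orP[/eqP->|xs].
  by case: (H' t Ht).
by case: (H' t Ht) => _; apply.
Qed.

Lemma cont_eps (U V : pseudoMetricType R) (F : U * V -> R) (u : U) (v : V) :
  {for (u, v), continuous F} -> forall e, 0 < e ->
  exists2 eta, 0 < eta & forall u' v', ball u eta u' -> ball v eta v' ->
    `|F (u, v) - F (u', v')| < e.
Proof.
move=> Fc e e0.
have := Fc; move/cvgrPdist_lt => /(_ e e0) /nbhs_ballP [eta eta0 H].
by exists eta => // u' v' bu bv; apply: (H (u', v')); split.
Qed.

Lemma ballR (x y e : R) : ball x e y <-> `|x - y| < e.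
Proof. by rewrite -ball_normE /ball_ /=. Qed.

Lemma ball_rowP k (x y : 'rV[R]_k) e : 0 < e -> (forall j, `|x 0 j - y 0 j| < e) -> ball x e y.
Proof.
move=> e0 H; split => // i j; rewrite (ord1 i); exact/ballR.
Qed.

End NearT.

Section Aux.
Context {R : realType}.

Lemma nearTup_impl n (t0 : n.-tuple R) (P Q : n.-tuple R -> Prop) :
  nearTup t0 P -> (forall t, P t -> Q t) -> nearTup t0 Q.
Proof. by move=> [del del0 H] PQ; exists del => // t /H /PQ. Qed.

Lemma nearTup_par (M k L Y : nat) (r : nat -> nat) (t0 : #|{: pidx M k L Y r}|.-tuple R)
  (i : pidx M k L Y r) (e : R) :
  0 < e -> nearTup t0 (fun t => `|par t0 i - par t i| < e).
Proof. by move=> e0; exists e => // t Ht; apply: Ht. Qed.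

Lemma nearTup_theta (M k L Y : nat) (r : nat -> nat) (t0 : #|{: pidx M k L Y r}|.-tuple R)
  (d : 'I_M) (e : R) :
  0 < e -> nearTup t0 (fun t => ball (dec_theta t0 d) e (dec_theta t d)).
Proof.
move=> e0; exists e => // t Ht; apply: ball_rowP => // j; rewrite !mxE; exact: Ht.
Qed.

Lemma box_measurable n (t0 : n.-tuple R) (del : R) :
  measurable [set t : n.-tuple R | forall i, `|tnth t0 i - tnth t i| < del].
Proof.
have -> : [set t : n.-tuple R | forall i, `|tnth t0 i - tnth t i| < del] =
  \bigcap_(i in [set: 'I_n]) (setT `&` ((fun t : n.-tuple R => tnth t i) @^-1`
       `](tnth t0 i - del), (tnth t0 i + del)[%classic)).
  apply/seteqP; split => t /= H.
    by move=> i _; split => //=; rewrite in_itv /= -ltr_distlC.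
  by move=> i; have [_ /=] := H i I; rewrite in_itv /= -ltr_distlC.
apply: fin_bigcap_measurable; first exact: finite_finset.
by move=> i _; apply: measurable_tnth => //; exact: measurable_itv.
Qed.

End Aux.

Unset Implicit Arguments.
Set Strict Implicit.
Theorem claim16 (R : realType) (s k : nat) (Theta : set 'rV[R]_k)
  (f : 'rV[R]_k -> 'rV[R]_s -> R)
  (HTheta : open Theta)
  (Hcont : forall th x, Theta th ->
     {for (th, x), continuous (fun q : 'rV[R]_k * 'rV[R]_s => f q.1 q.2)})
  (Hnondeg : forall (m : nat) (xs : 'I_m -> 'rV[R]_s), injective xs ->
     exists th : 'I_m -> 'rV[R]_k, (forall d, Theta (th d)) /\
       \det (\matrix_(i < m, d < m) f (th d) (xs i)) != 0)
  (L : nat) (HL : (1 <= L)%N) (r : nat -> nat)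
  (Hr : forall l, (l < L)%N -> (0 < r l)%N)
  (Y : nat) (y : 'I_Y)
  (M : nat) (xt : 'I_M -> 'rV[R]_s) (Hxt : injective xt)
  (p : #|{: pidx M k L Y r}|.-tuple R -> R)
  (Hp : cont_nowhere_vanishing_pdf
          [set t | forall d : 'I_M, Theta (dec_theta t d)] p) :
  exists A : set (#|{: pidx M k L Y r}|.-tuple R),
    [/\ measurable A,
        (forall t, A t ->
           (forall d : 'I_M, Theta (dec_theta t d)) /\
           exists (th : 'I_M -> 'rV[R]_k) (b : 'I_(2 ^ L) -> 'I_M -> R) (c : R),
             (forall d, Theta (th d)) /\
             forall ds : 'I_(2 ^ L) -> 'I_M,
               shallow1_score (fun d x => f (th d) x) b c (fun i => xt (ds i))
               = deep_net_score f y t (fun i => xt (ds i)))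
      & (0 < prob_density p A)%E].
Proof.
have [th [Hth Hdet]] := Hnondeg M xt Hxt.
pose Fm := \matrix_(i < M, d < M) f (th d) (xt i).
have Fu : Fm \in unitmx by rewrite unitmxE unitfE.
pose al := invmx Fm *m const_mx (-1) : 'cV[R]_M.
have Hal : forall d', \sum_d al d 0 * f (th d) (xt d') = -1.
  move=> d'; have : (Fm *m al) d' 0 = -1 by rewrite /al mulmxA mulmxV // mul1mx mxE.
  by rewrite mxE => <-; apply: eq_bigr => d _; rewrite mulrC /Fm [in RHS]mxE.
pose I := pidx M k L Y r.
pose v0 (x : I) : R := match x with
  | inl (inl (inl (d, j))) => th d 0 j
  | inl (inl (inr (g, d))) => al d 0
  | _ => 0 end.
pose t0 := [tuple v0 (enum_val i) | i < #|{: I}|].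
have par0 : forall x, par t0 x = v0 x.
  by move=> x; rewrite /par tnth_mktuple enum_rankK.
have th0 : forall d, dec_theta t0 d = th d.
  by move=> dd; apply/matrixP => i j; rewrite (ord1 i) mxE par0.
have Om0 : forall d, Theta (dec_theta t0 d) by move=> d; rewrite th0.
have [Hpos Hzero Hpc Hint] := Hp.
have p0 : 0 < p t0 by apply: Hpos.
have NOm : nearTup t0 (fun t => forall d : 'I_M, Theta (dec_theta t d)).
  apply: nearTup_all => d.
  have := HTheta; rewrite openE => /(_ _ (Hth d)) /nbhs_ballP [e e0 He].
  have Hn := nearTup_theta t0 d e0; apply: (nearTup_impl Hn) => t Ht.
  by apply: He; rewrite -th0.
have NZ : nearTup t0 (fun t => forall (g : 'I_(r 0)) (d' : 'I_M),
    \sum_(d < M) par t (inl (inl (inr (g, d)))) * f (dec_theta t d) (xt d') <= 0).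
  apply: nearTup_all => g; apply: nearTup_all => d'.
  have M0 : (0 < M)%N := leq_ltn_trans (leq0n _) (ltn_ord d').
  pose eps : R := (M%:R *+ 2)^-1.
  have eps0 : 0 < eps by rewrite /eps invr_gt0 pmulrn_rgt0 // ltr0n.
  have Nd : nearTup t0 (fun t => forall d : 'I_M,
     `|al d 0 * f (th d) (xt d') - par t (inl (inl (inr (g, d)))) * f (dec_theta t d) (xt d')| < eps).
    apply: nearTup_all => d.
    have mc : {for (al d 0, f (th d) (xt d')), continuous (fun z : R * R => z.1 * z.2)} by exact: mul_continuous.
    have [eta1 eta10 H1] := cont_eps mc eps0.
    have [eta2 eta20 H2] := cont_eps (Hcont (th d) (xt d') (Hth d)) eta10.
    have Hn := nearTup_and (nearTup_par t0 (inl (inl (inr (g, d)))) eta10)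
                                    (nearTup_theta t0 d eta20).
    apply: (nearTup_impl Hn) => t [Ha Hb].
    rewrite par0 /= in Ha; rewrite th0 in Hb.
    apply: (H1 _ _ _ _); first exact/ballR.
    apply/ballR; exact: (H2 _ (xt d') Hb (ballxx _ eta20)).
  apply: (nearTup_impl Nd) => t Ht.
  have HZ0 := Hal d'.
  have : \sum_(d < M) par t (inl (inl (inr (g, d)))) * f (dec_theta t d) (xt d') -
          \sum_(d < M) al d 0 * f (th d) (xt d') <= M%:R * eps.
    rewrite -sumrB; apply: le_trans (ler_norm _) _.
    apply: le_trans (ler_norm_sum _ _ _) _.
    rewrite (_ : M%:R * eps = \sum_(d < M) eps); last by rewrite sumr_const card_ord mulr_natl.
    apply: ler_sum => d _.
    by rewrite distrC; apply: ltW.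
  rewrite HZ0 /eps.
  have Mp : (0 < M%:R :> R) by rewrite ltr0n.
  have -> : M%:R * (M%:R *+ 2)^-1 = 2^-1 :> R.
    by rewrite -[M%:R *+ 2]mulr_natr invfM mulrA mulfV ?mul1r // gt_eqF.
  lra.
have Np : nearTup t0 (fun t => (forall d : 'I_M, Theta (dec_theta t d)) -> p t0 / 2 <= p t).
  have e0 : 0 < p t0 / 2 by lra.
  have [del del0 H] := Hpc t0 Om0 (p t0 / 2) e0.
  exists del => // t Ht Om; have := H t Om Ht.
  rewrite ltr_norml => /andP[h1 h2]; lra.
have [del del0 Hall] := nearTup_and NOm (nearTup_and NZ Np).
exists [set t | forall i, `|tnth t0 i - tnth t i| < del]; split.
- exact: box_measurable.
- move=> t Ht; have [Om [HZ Hpt]] := Hall t Ht; split => //.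
  exists (dec_theta t), (fun _ _ => 0), 0; split => // ds.
  rewrite /shallow1_score mul0r; symmetry; exact: deep_zero.
- rewrite /prob_density.
  apply: (@lt_le_trans _ _ ((p t0 / 2) * (del *+ 2) ^+ #|{: I}|)%:E).
    by rewrite lte_fin mulr_gt0 // ?exprn_gt0 // ?pmulrn_rgt0 //; lra.
  apply: iter_lb => //; first lra.
    move=> t; rewrite lee_fin; apply: mulr_ge0; last by rewrite indicE.
    have [Om|nOm] := pselect (forall d : 'I_M, Theta (dec_theta t d)).
      by apply: ltW; apply: Hpos.
    by rewrite Hzero.
  move=> t Ht; have [Om [HZ Hpt]] := Hall t Ht.
  rewrite lee_fin indicE mem_set // mulr1; exact: Hpt.
Qed.
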